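(* Let $\eta\in(0,1)$ and $N_S>0$, and for $\xi\in[0,1]$ let $$I(\xi;N_S)=4N_S\left\{\frac{1-\xi}{1-2\eta^2\left(\sqrt{\xi N_S(1+\xi N_S)}-\xi N_S\right)}+\frac{\xi\left[(1-\eta^2)^2+\eta^4\right]}{(1-\eta^2)\left(1+2\xi N_S\eta^2(1-\eta^2)\right)}\right\}.$$ Then $\xi=0$ is not a maximizer of $\xi\mapsto I(\xi;N_S)$ over $[0,1]$.
   Context: $I(\xi;N_S)$ is the quantum Fisher information for estimating the transmission $\eta$ of a pure-loss (zero-temperature) bosonic channel using a single-mode pure displaced squeezed state with mean photon number $N_S$, a fraction $\xi$ of which is in squeezing and $1-\xi$ in displacement (displacement along the optimal angle); $\xi=0$ corresponds to a coherent state. *)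

(* Defs.v *)
From Stdlib Require Import Reals.
Open Scope R_scope.

(* Quantum Fisher information I(xi; N_S) for estimating the transmission eta
   of a pure-loss channel with a displaced squeezed probe (fraction xi in squeezing). *)
Definition QFI (eta NS xi : R) : R :=
  4 * NS *
  ( (1 - xi) / (1 - 2 * eta ^ 2 * (sqrt (xi * NS * (1 + xi * NS)) - xi * NS))
  + xi * ((1 - eta ^ 2) ^ 2 + eta ^ 4)
      / ((1 - eta ^ 2) * (1 + 2 * xi * NS * eta ^ 2 * (1 - eta ^ 2))) ).

Definition is_maximizer_on (f : R -> R) (a b x : R) : Prop :=
  a <= x <= b /\ forall y, a <= y <= b -> f y <= f x.

(* Main.v *)
Require Import Defs.
From Stdlib Require Import Reals Lra Psatz.
Open Scope R_scope.

Theorem proposition2 (eta NS : R) :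
  0 < eta < 1 -> 0 < NS ->
  ~ is_maximizer_on (QFI eta NS) 0 1 0.
Proof.
  intros [He0 He1] HN [_ Hmax].
  set (e2 := eta ^ 2).
  assert (He2 : 0 < e2 < 1) by (unfold e2; split; nra).
  set (a := e2 * NS).
  assert (Ha : 0 < a) by (unfold a; nra).
  assert (Ea : a = e2 * NS) by reflexivity.
  assert (Ee : e2 = eta ^ 2) by reflexivity.
  set (t := a / (1 + 2 * a)).
  assert (Ht0 : 0 < t) by (unfold t; apply Rdiv_lt_0_compat; lra).
  assert (Htd : t * (1 + 2 * a) = a) by (unfold t; field; lra).
  assert (Ht1 : t < 1/2) by nra.
  assert (Hkey : 2 * a * (1 - t) > t) by nra.
  set (xi := t ^ 2 / NS).
  assert (HxN : xi * NS = t ^ 2) by (unfold xi; field; lra).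
  clearbody a t.
  assert (Hxi0 : 0 < xi) by (unfold xi; apply Rdiv_lt_0_compat; nra).
  assert (Hxi1 : xi <= 1).
  { assert (t ^ 2 <= NS) by (rewrite Ea in *; nra).
    nra. }
  specialize (Hmax xi (conj (Rlt_le _ _ Hxi0) Hxi1)).
  unfold QFI in Hmax.
  replace (0 * NS) with 0 in Hmax by ring.
  replace (0 * (1 + 0)) with 0 in Hmax by ring.
  rewrite sqrt_0 in Hmax.
  replace (1 - 2 * eta ^ 2 * (0 - 0)) with 1 in Hmax by ring.
  replace (1 - 2 * 0 * NS * eta ^ 2 * (1 - eta ^ 2)) with 1 in Hmax by ring.
  replace (4 * NS * ((1 - 0) / 1 + 0 * ((1 - eta ^ 2) ^ 2 + eta ^ 4) /
     ((1 - eta ^ 2) * (1 + 2 * 0 * NS * eta ^ 2 * (1 - eta ^ 2))))) with (4 * NS * 1)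
    in Hmax by (field; fold e2; lra).
  fold e2 in Hmax. rewrite HxN in Hmax.
  set (s := sqrt (t ^ 2 * (1 + t ^ 2))) in Hmax.
  assert (Hs1 : t <= s).
  { unfold s. rewrite <- (sqrt_pow2 t) at 1 by lra.
    apply sqrt_le_1_alt. nra. }
  assert (Hs0 : 0 <= s) by (apply sqrt_pos).
  assert (Hss : s * s = t ^ 2 * (1 + t ^ 2)) by (unfold s; apply sqrt_sqrt; nra).
  assert (Hs2 : s < t ^ 2 + 1/2) by nra.
  clearbody s.
  set (D1 := 1 - 2 * e2 * (s - t ^ 2)) in Hmax.
  assert (HD1 : 0 < D1) by (unfold D1; nra).
  assert (ED : D1 = 1 - 2 * e2 * (s - t ^ 2)) by reflexivity.
  replace (eta ^ 4) with (e2 ^ 2) in Hmax by (rewrite Ee; ring).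
  clearbody D1 xi e2.
  assert (Hgt : 1 - xi > D1).
  { rewrite ED.
    assert (2 * e2 * (t - t ^ 2) * NS > t ^ 2) by (rewrite Ea in Hkey; assert (H0 := Rmult_lt_compat_l t _ _ Ht0 Hkey); nra).
    assert (2 * e2 * (s - t ^ 2) * NS > t ^ 2) by nra.
    nra. }
  assert (HA : 1 < (1 - xi) / D1).
  { apply (Rmult_lt_reg_r D1); [lra|].
    replace ((1 - xi) / D1 * D1) with (1 - xi) by (field; lra). lra. }
  assert (HB : 0 <= xi * ((1 - e2) ^ 2 + e2 ^ 2) /
     ((1 - e2) * (1 + 2 * xi * NS * e2 * (1 - e2)))).
  { unfold Rdiv; apply Rmult_le_pos; [|apply Rlt_le, Rinv_0_lt_compat].
    - apply Rmult_le_pos; nra.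
    - apply Rmult_lt_0_compat; [lra|]. assert (0 <= 2 * xi * NS * e2) by (apply Rmult_le_pos; [|lra]; nra). nra. }
  set (B := xi * ((1 - e2) ^ 2 + e2 ^ 2) /
     ((1 - e2) * (1 + 2 * xi * NS * e2 * (1 - e2)))) in *.
  set (A := (1 - xi) / D1) in *.
  clearbody A B. nra.
Qed.
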